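(* Let $G$ be a directed acyclic graph, let $s,t\in V(G)$, and let $k=\operatorname{fes}(G)$. Then the number of distinct directed $s$-$t$ paths in $G$ is at most $2^k$.
   Context: $\operatorname{fes}(G)$ denotes the minimum size of a feedback edge set of the underlying undirected graph of $G$, i.e., the minimum number of edges whose removal makes the underlying undirected graph acyclic (a forest). *)

(* Defs.v *)
From mathcomp Require Import all_boot.
Set Implicit Arguments. Unset Strict Implicit. Unset Printing Implicit Defensive.

Definition dag (T : finType) (e : rel T) : Prop :=
  forall x y : T, e x y -> ~~ connect e y x.

Definition edges (T : finType) (e : rel T) : {set T * T} :=
  [set p | e p.1 p.2].

Definition und_minus (T : finType) (e : rel T) (F : {set T * T}) : rel T :=
  fun x y => (e x y && ((x, y) \notin F)) || (e y x && ((y, x) \notin F)).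

(* An undirected (simple) graph r is acyclic (a forest): it has no cycle, i.e.
   no cyclic sequence of >= 3 pairwise distinct vertices with consecutive
   (cyclically) vertices adjacent. *)
Definition und_acyclic (T : finType) (r : rel T) : Prop :=
  forall c : seq T, uniq c -> cycle r c -> size c <= 2.

Definition is_feedback_edge_set (T : finType) (e : rel T) (F : {set T * T}) : Prop :=
  F \subset edges e /\ und_acyclic (und_minus e F).

Definition is_fes (T : finType) (e : rel T) (k : nat) : Prop :=
  (exists F, is_feedback_edge_set e F /\ #|F| = k) /\
  (forall F, is_feedback_edge_set e F -> k <= #|F|).

(* p is (the vertex sequence after s of) a directed s-t path in G. *)
Definition st_path (T : finType) (e : rel T) (s t : T) (p : seq T) : Prop :=
  path e s p /\ last s p = t /\ uniq (s :: p).

(* Main.v *)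
Require Import Defs.
From mathcomp Require Import all_boot.
Set Implicit Arguments. Unset Strict Implicit. Unset Printing Implicit Defensive.

Section Helpers.
Variable T : finType.

Fixpoint pe (s : T) (p : seq T) : seq (T * T) :=
  if p is x :: p' then (s, x) :: pe x p' else [::].

Lemma pe_cat s a b : pe s (a ++ b) = pe s a ++ pe (last s a) b.
Proof. by elim: a s => [|x a IH] s //=; rewrite IH. Qed.

Lemma pe_fst s p u : u \in pe s p -> u.1 \in belast s p.
Proof.
elim: p s => [|x p IH] s //=; rewrite in_cons => /orP [/eqP -> | /IH H].
  by rewrite in_cons eqxx.
by rewrite in_cons H orbT.
Qed.

Lemma pe_head s p u : uniq (s :: p) -> u \in pe s p -> u.1 = s -> u = (s, head s p).
Proof.
case: p => [|x p] //= /andP [hs _]; rewrite in_cons => /orP [/eqP -> //| /pe_fst H] E.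
move: H; rewrite E => /mem_belast H; by rewrite H in hs.
Qed.

Lemma dag_antisym (e : rel T) x y : dag e -> connect e x y -> connect e y x -> x = y.
Proof.
move=> hd /connectP [[|a pth] /=]; first by move=> _ ->.
move=> /andP [hxa hp] hl hyx; exfalso.
have hay : connect e a y by apply/connectP; exists pth.
by move: (hd _ _ hxa); rewrite (connect_trans hay hyx).
Qed.

Lemma path_und (e : rel T) (F : {set T * T}) s a : path e s a -> (forall u, u \in pe s a -> u \notin F) ->
  path (und_minus e F) s a.
Proof.
elim: a s => [|x a IH] s //= /andP [hsx hp] hF.
apply/andP; split; last by apply: IH => // u hu; apply: hF; rewrite in_cons hu orbT.
by rewrite /und_minus hsx (hF (s, x)) ?in_cons ?eqxx.
Qed.

Lemma mem_last_nn (s : T) p : p != [::] -> last s p \in p.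
Proof. by case: p => [|x p] //= _; apply: mem_last. Qed.

Variables (e : rel T) (F : {set T * T}).
Hypothesis hd : dag e.
Hypothesis ha : und_acyclic (und_minus e F).

Lemma diverge s P Q : path e s P -> path e s Q -> uniq (s :: P) -> uniq (s :: Q) ->
  last s P = last s Q -> P != [::] -> Q != [::] ->
  (forall u, u \in F -> (u \in pe s P) = (u \in pe s Q)) -> head s P = head s Q.
Proof.
move=> pP pQ uP uQ hl nP nQ hF.
apply/eqP/negPn/negP => hx.
have Fs : forall u, u \in F -> u \in pe s P -> u.1 = s -> False.
  move=> u uF up us; have uq : u \in pe s Q by rewrite -hF.
  move: (pe_head uP up us) (pe_head uQ uq us) => -> [] h.
  by rewrite h eqxx in hx.
have hasPQ : has (mem Q) P.
  by apply/hasP; exists (last s P); [apply: mem_last_nn | rewrite hl /=; apply: mem_last_nn].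
have [z [p1 [p2 [EP [zQ hp1]]]]] : exists z p1 p2,
    P = rcons p1 z ++ p2 /\ z \in Q /\ ~~ has (mem Q) p1.
  by case: (split_find hasPQ) => z p1 p2 ? ?; exists z, p1, p2.
have [q1 [q2 EQ]] : exists q1 q2, Q = q1 ++ z :: q2.
  by case: (splitPr zQ) => q1 q2; exists q1, q2.
subst P Q.
have A : forall w, w \in p1 -> w \in q1 -> False.
  move=> w w1 w2; move/hasP: hp1; apply; exists w => //=; by rewrite mem_cat w2.
have zq1 : z \notin q1.
  move: uQ => /= /andP [_]; rewrite cat_uniq => /and3P [_ /hasPn H _].
  by apply: H; rewrite in_cons eqxx.
have B : forall w, w \in q1 -> w \in p2 -> False.
  move=> w w1 w2.
  have c1 : connect e z w.
    move: pP; rewrite cat_path last_rcons => /andP [_ /path_connect]; apply.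
    by rewrite in_cons w2 orbT.
  have c2 : connect e w z.
    case: (splitPr w1) pQ => a b; rewrite -catA /= cat_path /= => /andP [_ /andP [_ H]].
    apply: (path_connect H); by rewrite in_cons mem_cat in_cons eqxx !orbT.
  by move: (dag_antisym hd c1 c2) w1 => <-; rewrite (negbTE zq1).
move: uP; rewrite /= mem_cat mem_rcons in_cons negb_or negb_or => /andP [/andP [/andP [sz sp1] sp2]].
rewrite cat_uniq rcons_uniq => /and3P [/andP [zp1 up1] _ _].
move: uQ; rewrite /= mem_cat in_cons negb_or negb_or => /andP [/and3P [sq1 _ _]].
rewrite cat_uniq => /and3P [uq1 _ _].
have prefP : forall u, u \in pe s (rcons p1 z) -> u \notin F.
  move=> u hu; apply/negP => uF.
  have up : u \in pe s (rcons p1 z ++ p2) by rewrite pe_cat mem_cat hu.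
  move: (pe_fst hu); rewrite belast_rcons in_cons => /orP [/eqP us | u1].
    exact: Fs uF up us.
  have uq : u \in pe s (q1 ++ z :: q2) by rewrite -hF.
  move: (mem_belast (pe_fst uq)); rewrite in_cons => /orP [/eqP us | uQ].
    by rewrite -us u1 in sp1.
  by move/hasP: hp1; apply; exists u.1.
have prefQ : forall u, u \in pe s (rcons q1 z) -> u \notin F.
  move=> u hu; apply/negP => uF.
  have uq : u \in pe s (q1 ++ z :: q2) by rewrite -cat_rcons pe_cat mem_cat hu.
  have up : u \in pe s (rcons p1 z ++ p2) by rewrite hF.
  move: (pe_fst hu); rewrite belast_rcons in_cons => /orP [/eqP us | u1].
    exact: Fs uF up us.
  move: (mem_belast (pe_fst up)); rewrite in_cons mem_cat mem_rcons in_cons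
    => /orP [/eqP us | /orP [/orP [/eqP uz | u1p] | u2p]].
  - by rewrite -us u1 in sq1.
  - by rewrite -uz u1 in zq1.
  - exact: A u1p u1.
  - exact: B u1 u2p.
have r1 : path (und_minus e F) s (rcons p1 z).
  apply: path_und prefP; by move: pP; rewrite cat_path => /andP [].
have r2 : path (und_minus e F) s (rcons q1 z).
  apply: path_und prefQ; by move: pQ; rewrite -cat_rcons cat_path => /andP [].
have rsym : forall x y, und_minus e F x y = und_minus e F y x.
  by move=> x y; rewrite /und_minus orbC.
have cyc : cycle (und_minus e F) (s :: (rcons p1 z ++ rev q1)).
  rewrite /= rcons_cat cat_path r1 last_rcons /=.
  have -> : rcons (rev q1) s = rev (belast s (rcons q1 z)) by rewrite belast_rcons rev_cons.
  rewrite -[X in path _ X](last_rcons s q1 z) rev_path; by rewrite (eq_path (e' := und_minus e F)).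
have uc : uniq (s :: (rcons p1 z ++ rev q1)).
  rewrite /= mem_cat mem_rcons in_cons mem_rev negb_or negb_or sz sp1 sq1 /=.
  rewrite cat_uniq rcons_uniq zp1 up1 rev_uniq uq1 /= andbT.
  apply/hasPn => w; rewrite mem_rev => wq; rewrite mem_rcons in_cons negb_or.
  apply/andP; split; first by apply/negP => /eqP wz; rewrite -wz wq in zq1.
  by apply/negP => wp; apply: (A w).
move: (ha uc cyc) hx; rewrite /= size_cat size_rcons size_rev.
case: (p1) => [|a p1'] //=; case: (q1) => [|b q1'] //=; idtac.
by move=> _; rewrite eqxx.
Qed.

Lemma path_uniq_F s p q : path e s p -> path e s q -> uniq (s :: p) -> uniq (s :: q) ->
  last s p = last s q -> (forall u, u \in F -> (u \in pe s p) = (u \in pe s q)) -> p = q.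
Proof.
elim: p s q => [|x p IH] s q.
  case: q => [|y q] //= _ _ _ /andP [hs _] hl; exfalso.
  by move: (mem_last y q); rewrite -hl (negbTE hs).
case: q => [|y q].
  move=> _ _ /= /andP [hs _] _ hl; exfalso.
  by move: (mem_last x p); rewrite hl (negbTE hs).
move=> pp pq up uq hl hF.
have hxy : x = y.
  by apply: (diverge pp pq up uq hl) => //.
subst y; congr (_ :: _).
move: pp pq up uq hl hF => /= /andP [_ pp] /andP [_ pq] /andP [sp up] /andP [sq uq] hl hF.
apply: (IH x q pp pq up uq hl) => u uF.
move: (hF u uF); rewrite !in_cons.
have [-> | ne] := eqVneq u (s, x); last by [].
have Hn : forall r, uniq (x :: r) -> s \notin x :: r -> (s, x) \notin pe x r.
  move=> r _ hs; apply/negP => /pe_fst /mem_belast /= H; by rewrite H in hs.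
by rewrite (negbTE (Hn _ up sp)) (negbTE (Hn _ uq sq)).
Qed.

End Helpers.

Theorem lemma3 (T : finType) (e : rel T) (s t : T) (k : nat) :
  dag e -> is_fes e k ->
  forall ps : seq (seq T), uniq ps -> (forall p, p \in ps -> st_path e s t p) ->
  size ps <= 2 ^ k.
Proof.
move=> hd [[F [[_ ha] <-]] _] ps ups hps.
pose f (p : seq T) := [set u in F | u \in pe s p].
have inj : {in ps &, injective f}.
  move=> p q hp hq E.
  case: (hps p hp) => pp [lp up]; case: (hps q hq) => pq [lq uq].
  apply: (path_uniq_F hd ha pp pq up uq); first by rewrite lp lq.
  move=> u uF; move/setP: E => /(_ u); by rewrite !inE uF.
rewrite -card_powerset -(size_map f) cardE.
apply: uniq_leq_size; first by rewrite map_inj_in_uniq.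
move=> A /mapP [p _ ->]; rewrite mem_enum powersetE.
by apply/subsetP => u; rewrite inE => /andP [].
Qed.
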